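(* In the setup described in the context, for all vector fields $x,y$, $$\tilde\rho(x,y)=\rho(x,y)+\tfrac18(3\tilde\tau^*+\tilde\tau-3\tau-\tau^* )\,g(x,y)+\tfrac18(3\tilde\tau+\tilde\tau^*-3\tau^*-\tau)\,\tilde g(x,y).$$
   Context: Let $M$ be a 3-dimensional smooth manifold. Fix a coordinate chart $(x^1,x^2,x^3)$ with coordinate vector fields $\partial_i$. Structures: - $g$ is a Riemannian metric with $g(\partial_1,\partial_1)=g(\partial_2,\partial_2)=A$, $g(\partial_3,\partial_3)=B$ and $g(\partial_i,\partial_j)=0$ for $i\ne j$. Here $A,B$ are smooth positive functions. - $Q$ is the $(1,1)$-tensor field with $Q\partial_1=\partial_2$, $Q\partial_2=-\partial_1$, $Q\partial_3=\partial_3$. - $P=Q^2$. - $\tilde g(x,y)=g(x,Py)$ is the associated indefinite metric, with components $\mathrm{diag}(-A,-A,B)$. Connections and curvature: - $\nabla$ and $\tilde\nabla$ are the Levi-Civita connections of $g$ and $\tilde g$. - $R(x,y)z=\nabla_x\nabla_yz-\nabla_y\nabla_xz-\nabla_{[x,y]}z$ and $R(x,y,z,t)=g(R(x,y)z,t)$. Analogously $\tilde R$ is built from $\tilde\nabla$, with $\tilde R(x,y,z,t)=\tilde g(\tilde R(x,y)z,t)$. Ricci tensors and scalar quantities ($\{e_i\}$ a basis; $g^{ij}$ and $\tilde g^{ij}$ are the inverse matrices of $g_{ij}$ and $\tilde g_{ij}$): - $\rho(y,z)=g^{ij}R(e_i,y,z,e_j)$ and $\tau=g^{ij}\rho(e_i,e_j)$.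 - $\tilde\rho(y,z)=\tilde g^{ij}\tilde R(e_i,y,z,e_j)$ and $\tilde\tau=\tilde g^{ij}\tilde\rho(e_i,e_j)$. - $\tau^*=\tilde g^{ij}\rho(e_i,e_j)$ and $\tilde\tau^*=g^{ij}\tilde\rho(e_i,e_j)$. *)

(* Defs.v *)
From HB Require Import structures.
From mathcomp Require Import all_boot all_order all_algebra.
From mathcomp Require Import all_classical all_reals all_analysis.
Set Implicit Arguments. Unset Strict Implicit. Unset Printing Implicit Defensive.
Import Order.TTheory GRing.Theory Num.Theory.
Import numFieldNormedType.Exports.
Local Open Scope classical_set_scope.
Local Open Scope ring_scope.

Notation pt R := (matrix R 1 3) (only parsing).

Section Defs.
Variable R : realType.
Local Notation pt := (matrix R 1 3) (only parsing).

(* points of the coordinate chart (x^1,x^2,x^3), indices 0,1,2 *)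

Definition ev (i : 'I_3) : pt := delta_mx 0 i.

Definition pd (i : 'I_3) (f : pt -> R) : pt -> R := fun p => derive f p (ev i).

Definition iter_pd (s : seq 'I_3) (f : pt -> R) : pt -> R := foldr pd f s.

Definition smooth_on (U : set pt) (f : pt -> R) : Prop :=
  forall s : seq 'I_3, forall p, U p ->
    {for p, continuous (iter_pd s f)} /\
    (forall i, derivable (iter_pd s f) p (ev i)).

(* a metric field: components G p i j = G(\partial_i,\partial_j) at p *)
Definition metric_field := pt -> 'M[R]_3.

(* Christoffel symbols of the Levi-Civita connection:
   nabla_{d_i} d_j = sum_k Gamma k i j d_k *)
Definition Gamma (G : metric_field) (p : pt) (k i j : 'I_3) : R :=
  2^-1 * \sum_(l < 3) invmx (G p) k l *
    (pd i (fun q => G q j l) p + pd j (fun q => G q i l) p - pd l (fun q => G q i j) p).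

(* R(d_i,d_j) d_k = sum_l Rcoef l i j k d_l,
   with R(x,y)z = nabla_x nabla_y z - nabla_y nabla_x z - nabla_[x,y] z *)
Definition Rcoef (G : metric_field) (p : pt) (l i j k : 'I_3) : R :=
  pd i (fun q => Gamma G q l j k) p - pd j (fun q => Gamma G q l i k) p
  + \sum_(m < 3) (Gamma G p m j k * Gamma G p l i m - Gamma G p m i k * Gamma G p l j m).

(* R(d_i,d_j,d_k,d_t) = G(R(d_i,d_j)d_k, d_t) *)
Definition Rlow (G : metric_field) (p : pt) (i j k t : 'I_3) : R :=
  \sum_(l < 3) Rcoef G p l i j k * G p l t.

Definition Ricci (G : metric_field) (p : pt) (j k : 'I_3) : R :=
  \sum_(i < 3) \sum_(t < 3) invmx (G p) i t * Rlow G p i j k t.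

(* trace of the Ricci tensor of G with respect to the metric H:
   H^{ij} rho_G(d_i,d_j) *)
Definition scal (H G : metric_field) (p : pt) : R :=
  \sum_(i < 3) \sum_(j < 3) invmx (H p) i j * Ricci G p i j.

Definition bform (M : 'M[R]_3) (x y : pt) : R :=
  \sum_(i < 3) \sum_(j < 3) x 0 i * M i j * y 0 j.

(* the (1,1)-tensor Q: column j holds the components of Q d_j *)
Definition Qmx : 'M[R]_3 :=
  \matrix_(k < 3, j < 3)
    (if (k == 1%N :> nat) && (j == 0%N :> nat) then 1
     else if (k == 0%N :> nat) && (j == 1%N :> nat) then -1
     else if (k == 2%N :> nat) && (j == 2%N :> nat) then 1 else 0).

Definition Pmx : 'M[R]_3 := Qmx *m Qmx.

Definition gmet (A B : pt -> R) : metric_field :=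
  fun p => \matrix_(i < 3, j < 3)
    (if i == j then (if (i == 2%N :> nat) then B p else A p) else 0).

(* associated metric gt(x,y) = g(x, P y): components g(d_i, P d_j) *)
Definition gtil (A B : pt -> R) : metric_field := fun p => gmet A B p *m Pmx.

End Defs.

(* Main.v *)
Require Import Defs.
From HB Require Import structures.
From mathcomp Require Import all_boot all_order all_algebra.
From mathcomp Require Import all_classical all_reals all_analysis.
From mathcomp Require Import ring lra.
Import Order.TTheory GRing.Theory Num.Theory.
Import numFieldNormedType.Exports.
Local Open Scope classical_set_scope.
Local Open Scope ring_scope.
Set Implicit Arguments. Unset Strict Implicit. Unset Printing Implicit Defensive.

Definition s3 {R : realType} (F : 'I_3 -> R) := F 0 + F 1 + F 2.

Lemma sum3 (R : realType) (F : 'I_3 -> R) : \sum_(i < 3) F i = F 0 + F 1 + F 2.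
Proof. rewrite !big_ord_recl big_ord0 addr0 addrA; congr (F _ + F _ + F _); exact: val_inj. Qed.

Lemma ord3 (i : 'I_3) : i = 0 \/ i = 1 \/ i = 2.
Proof.
case: i => [[|[|[|n]]] h]; [left|right;left|right;right|by []]; exact: val_inj.
Qed.

Section V.
Variable R : realType.
Variables (v : 'I_3 -> R) (d : 'I_3 -> 'I_3 -> R) (d2 : 'I_3 -> 'I_3 -> 'I_3 -> R).
Definition GamV (k i j : 'I_3) : R := 2^-1 * ((v k)^-1 * ((if j == k then d i j else 0) + (if i == k then d j i else 0) - (if i == j then d k i else 0))).
Definition dGamV (m k i j : 'I_3) : R := 2^-1 * ( - (v k)^-2 * d m k * ((if j == k then d i j else 0) + (if i == k then d j i else 0) - (if i == j then d k i else 0))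
   + (v k)^-1 * ((if j == k then d2 m i j else 0) + (if i == k then d2 m j i else 0) - (if i == j then d2 m k i else 0))).
Definition RcoefV (l i j k : 'I_3) : R := dGamV i l j k - dGamV j l i k + s3 (fun m => GamV m j k * GamV l i m - GamV m i k * GamV l j m).
Definition GV (i j : 'I_3) : R := if i == j then v i else 0.
Definition GiV (i j : 'I_3) : R := if i == j then (v i)^-1 else 0.
Definition RlowV (i j k t : 'I_3) : R := s3 (fun l => RcoefV l i j k * GV l t).
Definition RicciV (j k : 'I_3) : R := s3 (fun i => s3 (fun t => GiV i t * RlowV i j k t)).
End V.
Arguments RicciV : simpl never.
Arguments GamV : simpl never.
Arguments dGamV : simpl never.

Definition TV {R : realType} (v : 'I_3 -> R) (Ric : 'I_3 -> 'I_3 -> R) : R :=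
  \sum_(i < 3) \sum_(j < 3) GiV v i j * Ric i j.

Section Alg.
Variable R : realType.
Variables (a b : R) (da db : 'I_3 -> R) (dda ddb : 'I_3 -> 'I_3 -> R).
Definition vg (k : 'I_3) := if (k == 2%N :> nat) then b else a.
Definition dg (i k : 'I_3) := if (k == 2%N :> nat) then db i else da i.
Definition d2g (m i k : 'I_3) := if (k == 2%N :> nat) then ddb m i else dda m i.
Definition vt (k : 'I_3) := if (k == 2%N :> nat) then b else - a.
Definition dt (i k : 'I_3) := if (k == 2%N :> nat) then db i else - da i.
Definition d2t (m i k : 'I_3) := if (k == 2%N :> nat) then ddb m i else - dda m i.
Hypotheses (ha : a != 0) (hb : b != 0).
Lemma ricg00 : RicciV vg dg d2g 0 0 = (((1%:R / 2%:R) * a ^- 2 * da 0 ^+ 2) + ((1%:R / 2%:R) * a ^- 2 * da 1 ^+ 2) + ((1%:R / 4%:R) * a ^- 1 * b ^- 1 * da 0 * db 0) - ((1%:R / 4%:R) * a ^- 1 * b ^- 1 * da 1 * db 1) - ((1%:R / 2%:R) * a ^- 1 * dda 0 0) - ((1%:R / 2%:R) * a ^- 1 * dda 1 1) + ((1%:R / 4%:R) * b ^- 2 * da 2 * db 2) + ((1%:R / 4%:R) * b ^- 2 * db 0 ^+ 2) - ((1%:R / 2%:R) * b ^- 1 * dda 2 2) - ((1%:R / 2%:R) * b ^- 1 * ddb 0 0)).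
Proof.
rewrite /RicciV /RlowV /RcoefV /dGamV /GamV /GV /GiV /vg /dg /d2g /s3 /=.
by field; rewrite ?ha ?hb.
Qed.
Lemma ricg01 : RicciV vg dg d2g 0 1 = (((1%:R / 4%:R) * a ^- 1 * b ^- 1 * da 0 * db 1) + ((1%:R / 4%:R) * a ^- 1 * b ^- 1 * da 1 * db 0) - ((1%:R / 2%:R) * a ^- 1 * dda 0 1) + ((1%:R / 2%:R) * a ^- 1 * dda 1 0) + ((1%:R / 4%:R) * b ^- 2 * db 0 * db 1) - ((1%:R / 2%:R) * b ^- 1 * ddb 0 1)).
Proof.
rewrite /RicciV /RlowV /RcoefV /dGamV /GamV /GV /GiV /vg /dg /d2g /s3 /=.
by field; rewrite ?ha ?hb.
Qed.
Lemma ricg02 : RicciV vg dg d2g 0 2 = (((1%:R / 2%:R) * a ^- 2 * da 0 * da 2) + ((1%:R / 4%:R) * a ^- 1 * b ^- 1 * da 2 * db 0) - ((1%:R / 2%:R) * a ^- 1 * dda 0 2) - ((1%:R / 2%:R) * b ^- 1 * ddb 0 2) + ((1%:R / 2%:R) * b ^- 1 * ddb 2 0)).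
Proof.
rewrite /RicciV /RlowV /RcoefV /dGamV /GamV /GV /GiV /vg /dg /d2g /s3 /=.
by field; rewrite ?ha ?hb.
Qed.
Lemma ricg10 : RicciV vg dg d2g 1 0 = (((1%:R / 4%:R) * a ^- 1 * b ^- 1 * da 0 * db 1) + ((1%:R / 4%:R) * a ^- 1 * b ^- 1 * da 1 * db 0) + ((1%:R / 2%:R) * a ^- 1 * dda 0 1) - ((1%:R / 2%:R) * a ^- 1 * dda 1 0) + ((1%:R / 4%:R) * b ^- 2 * db 0 * db 1) - ((1%:R / 2%:R) * b ^- 1 * ddb 1 0)).
Proof.
rewrite /RicciV /RlowV /RcoefV /dGamV /GamV /GV /GiV /vg /dg /d2g /s3 /=.
by field; rewrite ?ha ?hb.
Qed.
Lemma ricg11 : RicciV vg dg d2g 1 1 = (((1%:R / 2%:R) * a ^- 2 * da 0 ^+ 2) + ((1%:R / 2%:R) * a ^- 2 * da 1 ^+ 2) - ((1%:R / 4%:R) * a ^- 1 * b ^- 1 * da 0 * db 0) + ((1%:R / 4%:R) * a ^- 1 * b ^- 1 * da 1 * db 1) - ((1%:R / 2%:R) * a ^- 1 * dda 0 0) - ((1%:R / 2%:R) * a ^- 1 * dda 1 1) + ((1%:R / 4%:R) * b ^- 2 * da 2 * db 2) + ((1%:R / 4%:R) * b ^- 2 * db 1 ^+ 2) - ((1%:R / 2%:R) * b ^- 1 * dda 2 2) - ((1%:R / 2%:R) * b ^- 1 * ddb 1 1)).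
Proof.
rewrite /RicciV /RlowV /RcoefV /dGamV /GamV /GV /GiV /vg /dg /d2g /s3 /=.
by field; rewrite ?ha ?hb.
Qed.
Lemma ricg12 : RicciV vg dg d2g 1 2 = (((1%:R / 2%:R) * a ^- 2 * da 1 * da 2) + ((1%:R / 4%:R) * a ^- 1 * b ^- 1 * da 2 * db 1) - ((1%:R / 2%:R) * a ^- 1 * dda 1 2) - ((1%:R / 2%:R) * b ^- 1 * ddb 1 2) + ((1%:R / 2%:R) * b ^- 1 * ddb 2 1)).
Proof.
rewrite /RicciV /RlowV /RcoefV /dGamV /GamV /GV /GiV /vg /dg /d2g /s3 /=.
by field; rewrite ?ha ?hb.
Qed.
Lemma ricg20 : RicciV vg dg d2g 2 0 = (((1%:R / 2%:R) * a ^- 2 * da 0 * da 2) + ((1%:R / 4%:R) * a ^- 1 * b ^- 1 * da 2 * db 0) + ((1%:R / 2%:R) * a ^- 1 * dda 0 2) - (1%:R * a ^- 1 * dda 2 0)).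
Proof.
rewrite /RicciV /RlowV /RcoefV /dGamV /GamV /GV /GiV /vg /dg /d2g /s3 /=.
by field; rewrite ?ha ?hb.
Qed.
Lemma ricg21 : RicciV vg dg d2g 2 1 = (((1%:R / 2%:R) * a ^- 2 * da 1 * da 2) + ((1%:R / 4%:R) * a ^- 1 * b ^- 1 * da 2 * db 1) + ((1%:R / 2%:R) * a ^- 1 * dda 1 2) - (1%:R * a ^- 1 * dda 2 1)).
Proof.
rewrite /RicciV /RlowV /RcoefV /dGamV /GamV /GV /GiV /vg /dg /d2g /s3 /=.
by field; rewrite ?ha ?hb.
Qed.
Lemma ricg22 : RicciV vg dg d2g 2 2 = (((1%:R / 2%:R) * a ^- 2 * da 2 ^+ 2) + ((1%:R / 2%:R) * a ^- 1 * b ^- 1 * da 2 * db 2) + ((1%:R / 4%:R) * a ^- 1 * b ^- 1 * db 0 ^+ 2) + ((1%:R / 4%:R) * a ^- 1 * b ^- 1 * db 1 ^+ 2) - (1%:R * a ^- 1 * dda 2 2) - ((1%:R / 2%:R) * a ^- 1 * ddb 0 0) - ((1%:R / 2%:R) * a ^- 1 * ddb 1 1)).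
Proof.
rewrite /RicciV /RlowV /RcoefV /dGamV /GamV /GV /GiV /vg /dg /d2g /s3 /=.
by field; rewrite ?ha ?hb.
Qed.
Lemma rict00 : RicciV vt dt d2t 0 0 = (((1%:R / 2%:R) * a ^- 2 * da 0 ^+ 2) + ((1%:R / 2%:R) * a ^- 2 * da 1 ^+ 2) + ((1%:R / 4%:R) * a ^- 1 * b ^- 1 * da 0 * db 0) - ((1%:R / 4%:R) * a ^- 1 * b ^- 1 * da 1 * db 1) - ((1%:R / 2%:R) * a ^- 1 * dda 0 0) - ((1%:R / 2%:R) * a ^- 1 * dda 1 1) - ((1%:R / 4%:R) * b ^- 2 * da 2 * db 2) + ((1%:R / 4%:R) * b ^- 2 * db 0 ^+ 2) + ((1%:R / 2%:R) * b ^- 1 * dda 2 2) - ((1%:R / 2%:R) * b ^- 1 * ddb 0 0)).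
Proof.
rewrite /RicciV /RlowV /RcoefV /dGamV /GamV /GV /GiV /vt /dt /d2t /s3 /=.
by field; rewrite ?ha ?hb.
Qed.
Lemma rict01 : RicciV vt dt d2t 0 1 = (((1%:R / 4%:R) * a ^- 1 * b ^- 1 * da 0 * db 1) + ((1%:R / 4%:R) * a ^- 1 * b ^- 1 * da 1 * db 0) - ((1%:R / 2%:R) * a ^- 1 * dda 0 1) + ((1%:R / 2%:R) * a ^- 1 * dda 1 0) + ((1%:R / 4%:R) * b ^- 2 * db 0 * db 1) - ((1%:R / 2%:R) * b ^- 1 * ddb 0 1)).
Proof.
rewrite /RicciV /RlowV /RcoefV /dGamV /GamV /GV /GiV /vt /dt /d2t /s3 /=.
by field; rewrite ?ha ?hb.
Qed.
Lemma rict02 : RicciV vt dt d2t 0 2 = (((1%:R / 2%:R) * a ^- 2 * da 0 * da 2) + ((1%:R / 4%:R) * a ^- 1 * b ^- 1 * da 2 * db 0) - ((1%:R / 2%:R) * a ^- 1 * dda 0 2) - ((1%:R / 2%:R) * b ^- 1 * ddb 0 2) + ((1%:R / 2%:R) * b ^- 1 * ddb 2 0)).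
Proof.
rewrite /RicciV /RlowV /RcoefV /dGamV /GamV /GV /GiV /vt /dt /d2t /s3 /=.
by field; rewrite ?ha ?hb.
Qed.
Lemma rict10 : RicciV vt dt d2t 1 0 = (((1%:R / 4%:R) * a ^- 1 * b ^- 1 * da 0 * db 1) + ((1%:R / 4%:R) * a ^- 1 * b ^- 1 * da 1 * db 0) + ((1%:R / 2%:R) * a ^- 1 * dda 0 1) - ((1%:R / 2%:R) * a ^- 1 * dda 1 0) + ((1%:R / 4%:R) * b ^- 2 * db 0 * db 1) - ((1%:R / 2%:R) * b ^- 1 * ddb 1 0)).
Proof.
rewrite /RicciV /RlowV /RcoefV /dGamV /GamV /GV /GiV /vt /dt /d2t /s3 /=.
by field; rewrite ?ha ?hb.
Qed.
Lemma rict11 : RicciV vt dt d2t 1 1 = (((1%:R / 2%:R) * a ^- 2 * da 0 ^+ 2) + ((1%:R / 2%:R) * a ^- 2 * da 1 ^+ 2) - ((1%:R / 4%:R) * a ^- 1 * b ^- 1 * da 0 * db 0) + ((1%:R / 4%:R) * a ^- 1 * b ^- 1 * da 1 * db 1) - ((1%:R / 2%:R) * a ^- 1 * dda 0 0) - ((1%:R / 2%:R) * a ^- 1 * dda 1 1) - ((1%:R / 4%:R) * b ^- 2 * da 2 * db 2) + ((1%:R / 4%:R) * b ^- 2 * db 1 ^+ 2) + ((1%:R / 2%:R) * b ^- 1 * dda 2 2) - ((1%:R / 2%:R) * b ^- 1 * ddb 1 1)).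
Proof.
rewrite /RicciV /RlowV /RcoefV /dGamV /GamV /GV /GiV /vt /dt /d2t /s3 /=.
by field; rewrite ?ha ?hb.
Qed.
Lemma rict12 : RicciV vt dt d2t 1 2 = (((1%:R / 2%:R) * a ^- 2 * da 1 * da 2) + ((1%:R / 4%:R) * a ^- 1 * b ^- 1 * da 2 * db 1) - ((1%:R / 2%:R) * a ^- 1 * dda 1 2) - ((1%:R / 2%:R) * b ^- 1 * ddb 1 2) + ((1%:R / 2%:R) * b ^- 1 * ddb 2 1)).
Proof.
rewrite /RicciV /RlowV /RcoefV /dGamV /GamV /GV /GiV /vt /dt /d2t /s3 /=.
by field; rewrite ?ha ?hb.
Qed.
Lemma rict20 : RicciV vt dt d2t 2 0 = (((1%:R / 2%:R) * a ^- 2 * da 0 * da 2) + ((1%:R / 4%:R) * a ^- 1 * b ^- 1 * da 2 * db 0) + ((1%:R / 2%:R) * a ^- 1 * dda 0 2) - (1%:R * a ^- 1 * dda 2 0)).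
Proof.
rewrite /RicciV /RlowV /RcoefV /dGamV /GamV /GV /GiV /vt /dt /d2t /s3 /=.
by field; rewrite ?ha ?hb.
Qed.
Lemma rict21 : RicciV vt dt d2t 2 1 = (((1%:R / 2%:R) * a ^- 2 * da 1 * da 2) + ((1%:R / 4%:R) * a ^- 1 * b ^- 1 * da 2 * db 1) + ((1%:R / 2%:R) * a ^- 1 * dda 1 2) - (1%:R * a ^- 1 * dda 2 1)).
Proof.
rewrite /RicciV /RlowV /RcoefV /dGamV /GamV /GV /GiV /vt /dt /d2t /s3 /=.
by field; rewrite ?ha ?hb.
Qed.
Lemma rict22 : RicciV vt dt d2t 2 2 = (((1%:R / 2%:R) * a ^- 2 * da 2 ^+ 2) + ((1%:R / 2%:R) * a ^- 1 * b ^- 1 * da 2 * db 2) - ((1%:R / 4%:R) * a ^- 1 * b ^- 1 * db 0 ^+ 2) - ((1%:R / 4%:R) * a ^- 1 * b ^- 1 * db 1 ^+ 2) - (1%:R * a ^- 1 * dda 2 2) + ((1%:R / 2%:R) * a ^- 1 * ddb 0 0) + ((1%:R / 2%:R) * a ^- 1 * ddb 1 1)).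
Proof.
rewrite /RicciV /RlowV /RcoefV /dGamV /GamV /GV /GiV /vt /dt /d2t /s3 /=.
by field; rewrite ?ha ?hb.
Qed.

Lemma alg_main (i j : 'I_3) :
  RicciV vt dt d2t i j = RicciV vg dg d2g i j
   + 8^-1 * (3 * TV vg (RicciV vt dt d2t) + TV vt (RicciV vt dt d2t) - 3 * TV vg (RicciV vg dg d2g) - TV vt (RicciV vg dg d2g)) * GV vg i j
   + 8^-1 * (3 * TV vt (RicciV vt dt d2t) + TV vg (RicciV vt dt d2t) - 3 * TV vt (RicciV vg dg d2g) - TV vg (RicciV vg dg d2g)) * GV vt i j.
Proof.
rewrite /TV !sum3 /GiV /=.
rewrite !ricg00 !ricg01 !ricg02 !ricg10 !ricg11 !ricg12 !ricg20 !ricg21 !ricg22 !rict00 !rict01 !rict02 !rict10 !rict11 !rict12 !rict20 !rict21 !rict22.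
rewrite /vg /vt.
case: (ord3 i) => [->|[->|->]]; case: (ord3 j) => [->|[->|->]]; rewrite /GV /= ?ricg00 ?ricg01 ?ricg02 ?ricg10 ?ricg11 ?ricg12 ?ricg20 ?ricg21 ?ricg22 ?rict00 ?rict01 ?rict02 ?rict10 ?rict11 ?rict12 ?rict20 ?rict21 ?rict22;
  by field; rewrite ?ha ?hb.
Qed.
End Alg.

Lemma open_near (R : realType) (U : set (pt R)) p : open U -> U p -> \forall q \near p, U q.
Proof. by move=> hU Up; apply: open_nbhs_nbhs. Qed.

Section Br.
Variable R : realType.
Variables (X Y : pt R -> R) (p : pt R).
Definition dd (k : 'I_3) : pt R -> R := if (k == 2%N :> nat) then Y else X.

Lemma gmetE q i j : gmet X Y q i j = if i == j then dd i q else 0.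
Proof. by rewrite /gmet mxE /dd; case: ifP => //; case: ifP. Qed.

Lemma dd_neq0 q k : X q != 0 -> Y q != 0 -> dd k q != 0.
Proof. by rewrite /dd; case: ifP. Qed.

Lemma invmx_gmet q : X q != 0 -> Y q != 0 ->
  invmx (gmet X Y q) = \matrix_(i, j) (if i == j then (dd i q)^-1 else 0).
Proof.
move=> hX hY.
set D := \matrix_(i, j) _.
have h : gmet X Y q *m D = 1%:M.
  apply/matrixP => i j; rewrite !mxE (bigD1 i) //= big1 => [|l hl]; last first.
    by rewrite gmetE eq_sym (negbTE hl) mul0r.
  rewrite gmetE !mxE eqxx addr0.

  case: ifP => [/eqP ->|hij]; last by rewrite mulr0.
  by rewrite mulfV ?dd_neq0.
have [Gu _] := mulmx1_unit h.
by rewrite -[invmx _]mulmx1 -h mulmxA mulVmx // mul1mx.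
Qed.

Lemma pdG q i j l : pd i (fun q => gmet X Y q j l) q = if j == l then pd i (dd j) q else 0.
Proof.
have -> : (fun q => gmet X Y q j l) = if j == l then dd j else cst 0.
  by apply: funext => q'; rewrite gmetE; case: ifP.
by case: ifP => _ //; rewrite /pd derive_cst.
Qed.

Definition GamF q (k i j : 'I_3) := 2^-1 * ((dd k q)^-1 * ((if j == k then pd i (dd j) q else 0)
  + (if i == k then pd j (dd i) q else 0) - (if i == j then pd k (dd i) q else 0))).

Lemma GammaE q k i j : X q != 0 -> Y q != 0 -> Gamma (gmet X Y) q k i j = GamF q k i j.
Proof.
move=> hX hY; rewrite /Gamma invmx_gmet //.
rewrite (bigD1 k) //= big1 ?addr0 => [|l hl]; last by rewrite mxE eq_sym (negbTE hl) mul0r.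
by rewrite mxE eqxx !pdG.
Qed.

Definition vB (k : 'I_3) := dd k p.
Definition dB (i k : 'I_3) := pd i (dd k) p.
Definition d2B (m i k : 'I_3) := pd m (pd i (dd k)) p.

Hypothesis hnz : \forall q \near p, X q != 0 /\ Y q != 0.
Hypothesis hd1 : forall k m, derivable (dd k) p (ev R m).
Hypothesis hd2 : forall k i m, derivable (pd i (dd k)) p (ev R m).

Lemma derivable_if (c : bool) (f : pt R -> R) v : derivable f p v ->
  derivable (fun q => if c then f q else 0) p v.
Proof. by case: c => // _; exact: derivable_cst. Qed.

Lemma derive_if (c : bool) (f : pt R -> R) v :
  'D_v (fun q => if c then f q else 0) p = if c then 'D_v f p else 0.
Proof. by case: c => //; rewrite derive_cst. Qed.

Lemma hnzp : X p != 0 /\ Y p != 0.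
Proof. exact: (nbhs_singleton hnz). Qed.

Lemma GammaEp k i j : Gamma (gmet X Y) p k i j = GamV vB dB k i j.
Proof. by have [h1 h2] := hnzp; rewrite GammaE. Qed.

Lemma dGammaE m k i j : pd m (fun q => Gamma (gmet X Y) q k i j) p = dGamV vB dB d2B m k i j.
Proof.
rewrite /pd (@near_eq_derive _ _ _ _ (fun q => GamF q k i j)); last first.
  near=> q.
  have [h1 h2] : X q != 0 /\ Y q != 0 by near: q.
  by rewrite /= GammaE.
set S1 := fun q => if j == k then pd i (dd j) q else 0.
set S2 := fun q => if i == k then pd j (dd i) q else 0.
set S3 := fun q => if i == j then pd k (dd i) q else 0.
have -> : (fun q => GamF q k i j) = (cst 2^-1) * ((fun q => (dd k q)^-1) * ((S1 + S2) - S3)).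
  by apply: funext => q; rewrite !fctE.
have hS1 : derivable S1 p (ev R m) by rewrite /S1; apply: derivable_if; exact: hd2.
have hS2 : derivable S2 p (ev R m) by rewrite /S2; apply: derivable_if; exact: hd2.
have hS3 : derivable S3 p (ev R m) by rewrite /S3; apply: derivable_if; exact: hd2.
have hk : dd k p != 0 by have [h1 h2] := hnzp; exact: dd_neq0.
have hV : derivable (fun q => (dd k q)^-1) p (ev R m) := derivableV hk (@hd1 k m).
have hS : derivable (S1 + S2 - S3) p (ev R m) by exact: (derivableB (derivableD hS1 hS2) hS3).
rewrite (deriveM (derivable_cst _ _ _) (derivableM hV hS)).
rewrite derive_cst (deriveM hV hS) (deriveV hk (@hd1 k m)).
rewrite (deriveB (derivableD hS1 hS2) hS3).
rewrite (deriveD hS1 hS2) /S1 /S2 /S3 !derive_if.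
rewrite /dGamV /vB /dB /d2B /pd !fctE /=.
rewrite scaler0 addr0 /GRing.scale /=.
have E : forall (h u t s D : R), h * (u * t + s * D) = h * (D * s + u * t) by move=> *; ring. exact: E.
Unshelve. all: by end_near. Qed.

Lemma RcoefE l i j k : Rcoef (gmet X Y) p l i j k = RcoefV vB dB d2B l i j k.
Proof. by rewrite /Rcoef /RcoefV /s3 sum3 !dGammaE !GammaEp. Qed.

Lemma RlowE i j k t : Rlow (gmet X Y) p i j k t = RlowV vB dB d2B i j k t.
Proof. by rewrite /Rlow /RlowV /s3 sum3 !RcoefE !gmetE. Qed.

Lemma invEp i j : invmx (gmet X Y p) i j = GiV vB i j.
Proof. by have [h1 h2] := hnzp; rewrite invmx_gmet // mxE. Qed.

Lemma RicciE j k : Ricci (gmet X Y) p j k = RicciV vB dB d2B j k.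
Proof. by rewrite /Ricci /RicciV /s3 !sum3 !invEp !RlowE. Qed.

Lemma gmetEp i j : gmet X Y p i j = GV vB i j.
Proof. by rewrite gmetE. Qed.
End Br.

Lemma scalE (R : realType) (X1 Y1 X2 Y2 : pt R -> R) p :
  X1 p != 0 -> Y1 p != 0 ->
  (forall j k, Ricci (gmet X2 Y2) p j k = RicciV (vB X2 Y2 p) (dB X2 Y2 p) (d2B X2 Y2 p) j k) ->
  scal (gmet X1 Y1) (gmet X2 Y2) p = TV (vB X1 Y1 p) (RicciV (vB X2 Y2 p) (dB X2 Y2 p) (d2B X2 Y2 p)).
Proof.
move=> h1 h2 hR; rewrite /scal /TV; apply: eq_bigr => i _; apply: eq_bigr => j _.
by rewrite hR invmx_gmet // mxE.
Qed.

Lemma bform_lin (R : realType) (M N G1 G2 : 'M[R]_3) (c1 c2 : R) (x y : pt R) :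
  (forall i j, M i j = N i j + c1 * G1 i j + c2 * G2 i j) ->
  bform M x y = bform N x y + c1 * bform G1 x y + c2 * bform G2 x y.
Proof.
move=> H; rewrite /bform !mulr_sumr -!big_split; apply: eq_bigr => i _ /=.
rewrite !mulr_sumr -!big_split; apply: eq_bigr => j _ /=.
rewrite H; ring.
Qed.

Lemma gtilE (R : realType) (A B : pt R -> R) : gtil A B = gmet (fun q => - A q) B.
Proof.
apply: funext => q; apply/matrixP => i j.
rewrite /gtil /Pmx /Qmx !mxE !sum3 !mxE !sum3 !mxE.
case: (ord3 i) => [->|[->|->]]; case: (ord3 j) => [->|[->|->]] /=; ring.
Qed.


Theorem theorem4p2 (R : realType) (U : set (pt R)) (A B : pt R -> R)
  (hU : open U)
  (hA : smooth_on U A) (hB : smooth_on U B)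
  (hApos : forall p, U p -> 0 < A p) (hBpos : forall p, U p -> 0 < B p)
  (x y : pt R -> pt R) :
  forall p, U p ->
    let g := gmet A B in
    let gt := gtil A B in
    let rho := Ricci g p in
    let rhot := Ricci gt p in
    let tau := scal g g p in
    let taut := scal gt gt p in
    let taus := scal gt g p in
    let tauts := scal g gt p in
    bform (\matrix_(i, j) rhot i j) (x p) (y p) =
      bform (\matrix_(i, j) rho i j) (x p) (y p)
      + 8^-1 * (3 * tauts + taut - 3 * tau - taus) * bform (g p) (x p) (y p)
      + 8^-1 * (3 * taut + tauts - 3 * taus - tau) * bform (gt p) (x p) (y p).
Proof.
move=> p Up g gt rho rhot tau taut taus tauts.
have Un := open_near hU Up.
set nA := fun q => - A q.
have EA : forall q, U q -> A q != 0 by move=> q Uq; rewrite gt_eqF // hApos.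
have EB : forall q, U q -> B q != 0 by move=> q Uq; rewrite gt_eqF // hBpos.
have nz1 : \forall q \near p, A q != 0 /\ B q != 0.
  near=> q; have Uq : U q by near: q.
  by split; [exact: EA | exact: EB].
have nz2 : \forall q \near p, nA q != 0 /\ B q != 0.
  near=> q; have Uq : U q by near: q.
  by split; [rewrite /nA oppr_eq0; exact: EA | exact: EB].
have dA0 : forall q, U q -> forall m, derivable A q (ev R m) by move=> q Uq m; exact: ((hA [::] q Uq).2 m).
have dB0 : forall m, derivable B p (ev R m) by move=> m; exact: ((hB [::] p Up).2 m).
have dA1 : forall i m, derivable (pd i A) p (ev R m) by move=> i m; exact: ((hA [:: i] p Up).2 m).
have dB1 : forall i m, derivable (pd i B) p (ev R m) by move=> i m; exact: ((hB [:: i] p Up).2 m).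
have pdnA : forall i, \forall q \near p, pd i nA q = - pd i A q.
  move=> i; near=> q; have Uq : U q by near: q.
  by rewrite /pd /nA (deriveN (dA0 q Uq i)).
have hd1a : forall k m, derivable (dd A B k) p (ev R m).
  by move=> k m; rewrite /dd; case: ifP => _; [exact: dB0 | exact: dA0].
have hd2a : forall k i m, derivable (pd i (dd A B k)) p (ev R m).
  by move=> k i m; rewrite /dd; case: ifP => _; [exact: dB1 | exact: dA1].
have hd1b : forall k m, derivable (dd nA B k) p (ev R m).
  move=> k m; rewrite /dd; case: ifP => _; first exact: dB0.
  exact: (derivableN (dA0 p Up m)).
have hd2b : forall k i m, derivable (pd i (dd nA B k)) p (ev R m).
  move=> k i m; rewrite /dd; case: ifP => _; first exact: dB1.
  apply: (@near_eq_derivable _ _ _ (fun q => - pd i A q)); last exact: (derivableN (dA1 i m)).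
  by near=> q; rewrite (near (pdnA i) q).
set da := fun i => pd i A p. set db := fun i => pd i B p.
set dda := fun m i => pd m (pd i A) p. set ddb := fun m i => pd m (pd i B) p.
have EvA : vB A B p = vg (A p) (B p) by apply: funext => k; rewrite /vB /dd /vg; case: ifP.
have EdA : dB A B p = dg da db by apply: funext => i; apply: funext => k; rewrite /dB /dd /dg; case: ifP.
have Ed2A : d2B A B p = d2g dda ddb.
  by apply: funext => m; apply: funext => i; apply: funext => k; rewrite /d2B /dd /d2g; case: ifP.
have EvB : vB nA B p = vt (A p) (B p) by apply: funext => k; rewrite /vB /dd /vt; case: ifP.
have EdB : dB nA B p = dt da db.
  apply: funext => i; apply: funext => k; rewrite /dB /dd /dt; case: ifP => // _.
  exact: (nbhs_singleton (pdnA i)).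
have Ed2B : d2B nA B p = d2t dda ddb.
  apply: funext => m; apply: funext => i; apply: funext => k; rewrite /d2B /dd /d2t; case: ifP => // _.
  rewrite /pd (near_eq_derive _ (pdnA i)).
  exact: (deriveN (dA1 i m)).
have RG := RicciE nz1 hd1a hd2a.
have RT := RicciE nz2 hd1b hd2b.
have hAp := EA p Up. have hBp := EB p Up.
have hnAp : nA p != 0 by rewrite /nA oppr_eq0.
rewrite /rhot /rho /tau /taut /taus /tauts /gt /g gtilE.
rewrite (scalE hAp hBp RG) (scalE hAp hBp RT) (scalE hnAp hBp RG) (scalE hnAp hBp RT).
apply: bform_lin => i j.
rewrite !gmetEp !mxE RG RT EvA EdA Ed2A EvB EdB Ed2B.
exact: alg_main.
Unshelve. all: by end_near.
Qed.
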